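(* Suppose $|2|_D=1$. Then for every $\gamma\in D$, writing $\gamma=\gamma_++\gamma_-$ with $\gamma_\pm\in D^\pm$, we have $|\gamma|_D=\max\{|\gamma_+|_D,|\gamma_-|_D\}$.
   Context: $F$ is a non-archimedean local field, $D$ the quaternion division algebra over $F$, $|x|_D=|\mathrm{Nrd}(x)|_F$. $K\subset D$ is a quadratic extension of $F$ with conjugation $\overline{\cdot}$, and $\mu\in K\setminus F$. $D^+=K=\{\gamma:\gamma\mu=\mu\gamma\}$ and $D^-=\{\gamma\in D:\gamma\mu=\overline\mu\gamma\}$; $D=D^+\oplus D^-$. *)

(* Defs.v *)
From HB Require Import structures.
From mathcomp Require Import all_boot all_order all_algebra all_field.
From Stdlib Require Import ClassicalEpsilon.
Set Implicit Arguments. Unset Strict Implicit. Unset Printing Implicit Defensive.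
Import Order.TTheory GRing.Theory Num.Theory.
Local Open Scope ring_scope.

(* ---------- Non-archimedean local fields ---------------------------------
   F is a field with a normalized discrete valuation v : F^x -> Z (values of
   v at 0 are irrelevant), complete, with finite residue field of cardinality
   q.        *)

(* "x lies in the ideal p^k" *)
Definition in_pow (F : fieldType) (v : F -> int) (k : int) (x : F) : Prop :=
  x = 0 \/ (x != 0 /\ k <= v x).

Record nonarch_local_field (F : fieldType) (v : F -> int) (q : nat) : Prop := {
  val_mul : forall x y : F, x != 0 -> y != 0 -> v (x * y) = v x + v y;
  val_add : forall x y : F, x != 0 -> y != 0 -> x + y != 0 ->
              Num.min (v x) (v y) <= v (x + y);
  val_normalized : exists pi : F, pi != 0 /\ v pi = 1;
  val_complete : forall u : nat -> F,
      (forall k : int, exists N : nat, forall m n : nat, (N <= m)%N -> (N <= n)%N ->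
          in_pow v k (u m - u n)) ->
      exists l : F, forall k : int, exists N : nat, forall n : nat, (N <= n)%N ->
          in_pow v k (u n - l);
  (* residue field O/p is finite with exactly q elements:
     s is a list of representatives, pairwise incongruent, covering O *)
  residue_card : exists s : seq F,
      size s = q /\
      (forall r, r \in s -> in_pow v 0 r) /\
      (forall i j : nat, (i < q)%N -> (j < q)%N ->
          in_pow v 1 (nth 0 s i - nth 0 s j) -> i = j) /\
      (forall x : F, in_pow v 0 x -> exists2 r, r \in s & in_pow v 1 (x - r))
}.

Definition absF (F : fieldType) (v : F -> int) (q : nat) (x : F) : rat :=
  if x == 0 then 0 else (q%:Q) ^ (- v x).

Definition quaternion_division_algebra (F : fieldType) (D : falgType F) : Prop :=
  [/\ \dim {: D} = 4%N,
      (forall x : D, x != 0 -> x \is a GRing.unit) &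
      (forall x : D, (forall y : D, x * y = y * x) -> exists a : F, x = a%:A)].

(* Reduced characteristic polynomial X^2 - Trd(x) X + Nrd(x):
   for x = a in F it is (X - a)^2; for x not in F it is the (degree 2)
   minimal polynomial of x over F. *)
Definition rcp_coeffs (F : fieldType) (D : falgType F) (x : D) (tn : F * F) : Prop :=
  (exists a : F, x = a%:A /\ tn = (a *+ 2, a ^+ 2)) \/
  ((forall a : F, x != a%:A) /\ x * x - tn.1 *: x + tn.2%:A = 0).

Definition rcp (F : fieldType) (D : falgType F) (x : D) : F * F :=
  epsilon (inhabits (0, 0)) (rcp_coeffs x).

Definition Trd (F : fieldType) (D : falgType F) (x : D) : F := (rcp x).1.
Definition Nrd (F : fieldType) (D : falgType F) (x : D) : F := (rcp x).2.

Definition absD (F : fieldType) (v : F -> int) (q : nat) (D : falgType F) (x : D) : rat :=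
  absF v q (Nrd x).

(* Galois conjugation of the quadratic subfield K = F(mu) containing x:
   xbar = Trd(x) - x (the other root of the minimal polynomial of x). *)
Definition conjK (F : fieldType) (D : falgType F) (x : D) : D := (Trd x)%:A - x.

Definition Dplus (F : fieldType) (D : falgType F) (mu g : D) : Prop := g * mu = mu * g.
Definition Dminus (F : fieldType) (D : falgType F) (mu g : D) : Prop := g * mu = conjK mu * g.

(* Main.v *)
Require Import Defs.
From HB Require Import structures.
From mathcomp Require Import all_boot all_order all_algebra all_field.
From mathcomp Require Import zify ring lra.
From Stdlib Require Import ClassicalEpsilon.
Import Order.TTheory GRing.Theory Num.Theory.
Local Open Scope ring_scope.
Set Implicit Arguments. Unset Strict Implicit.


Lemma v_one (F : fieldType) (v : F -> int) q (HF : nonarch_local_field v q) : v 1 = 0.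
Proof. have := val_mul HF (oner_neq0 F) (oner_neq0 F); rewrite mulr1. move: (v 1) => a; lia. Qed.

Lemma v_opp (F : fieldType) (v : F -> int) q (HF : nonarch_local_field v q) x :
  x != 0 -> v (- x) = v x.
Proof.
move=> x0.
have n1 : (-1 : F) != 0 by rewrite oppr_eq0 oner_neq0.
have := val_mul HF n1 n1; rewrite mulrNN mulr1 (v_one HF) => h.
have h1 : v (-1) = 0 by lia.
by rewrite -mulN1r (val_mul HF n1 x0) h1 add0r.
Qed.

Lemma v_inv (F : fieldType) (v : F -> int) q (HF : nonarch_local_field v q) x :
  x != 0 -> v (x^-1) = - v x.
Proof.
move=> x0; have xi0 : x^-1 != 0 by rewrite invr_eq0.
have := val_mul HF x0 xi0; rewrite mulfV // (v_one HF); move: (v _) (v _); lia.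
Qed.

Lemma v_strict (F : fieldType) (v : F -> int) q (HF : nonarch_local_field v q) x y :
  x != 0 -> y != 0 -> v x < v y -> x + y != 0 /\ v (x + y) = v x.
Proof.
move=> x0 y0 lt.
have xy0 : x + y != 0.
  apply/eqP => e; have : y = - x by rewrite -(addKr x y) e addr0.
  move=> ey; move: lt; rewrite ey (v_opp HF x0); lia.
split => //.
have h1 := val_add HF x0 y0 xy0.
have ny0 : - y != 0 by rewrite oppr_eq0.
have := val_add HF xy0 ny0; rewrite addrK (v_opp HF y0) => /(_ x0) h2.
move: lt h1 h2; move: (v x) (v y) (v (x+y)) => a b c.
rewrite /Num.min; case: ifP => H1; case: ifP => H2; move: H1 H2; lia.
Qed.

Lemma ip0 (F : fieldType) (v : F -> int) k : in_pow v k 0.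
Proof. by left. Qed.

Lemma ip_mono (F : fieldType) (v : F -> int) k k' x : k' <= k -> in_pow v k x -> in_pow v k' x.
Proof. move=> le [->|[x0 h]]; [by left|right; split=> //]; move: le h; move: (v x); lia. Qed.

Lemma ip_v (F : fieldType) (v : F -> int) x : x != 0 -> in_pow v (v x) x.
Proof. by move=> x0; right; split. Qed.

Lemma ip_opp (F : fieldType) (v : F -> int) q (HF : nonarch_local_field v q) k x :
  in_pow v k x -> in_pow v k (- x).
Proof.
case=> [->|[x0 h]]; first by rewrite oppr0; left.
by right; rewrite oppr_eq0 (v_opp HF x0).
Qed.

Lemma ip_add (F : fieldType) (v : F -> int) q (HF : nonarch_local_field v q) k x y :
  in_pow v k x -> in_pow v k y -> in_pow v k (x + y).
Proof.
case=> [->|[x0 hx]]; first by rewrite add0r.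
case=> [->|[y0 hy]]; first by rewrite addr0; right.
have [->|xy0] := eqVneq (x + y) 0; first by left.
right; split=> //; have := val_add HF x0 y0 xy0.
move: hx hy; move: (v x) (v y) (v (x+y)) => a b c.
rewrite /Num.min; case: ifP => H1; move: H1; lia.
Qed.

Lemma ip_mul (F : fieldType) (v : F -> int) q (HF : nonarch_local_field v q) k l x y :
  in_pow v k x -> in_pow v l y -> in_pow v (k + l) (x * y).
Proof.
case=> [->|[x0 hx]]; first by rewrite mul0r; left.
case=> [->|[y0 hy]]; first by rewrite mulr0; left.
right; rewrite mulf_neq0 // (val_mul HF x0 y0); split=> //.
move: hx hy; move: (v x) (v y) => a b; lia.
Qed.

Lemma ip_zero (F : fieldType) (v : F -> int) x : (forall k, in_pow v k x) -> x = 0.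
Proof.
move=> h; have [//|x0] := eqVneq x 0.
case: (h (v x + 1)) => [//|[_]]; move: (v x); lia.
Qed.


Lemma hensel_step (F : fieldType) (v : F -> int) q (HF : nonarch_local_field v q)
  (u a : F) (n : nat) : (2 : F) != 0 -> v 2 = 0 ->
  a != 0 -> v a = 0 -> in_pow v n.+1 (a * a - u) ->
  let a' := (a + u / a) / 2 in
  [/\ a' != 0, v a' = 0, in_pow v n.+2 (a' * a' - u) & in_pow v n.+1 (a' - a)].
Proof.
move=> two0 v2 a0 va he a'.
set e := a * a - u in he.
have ta0 : 2 * a != 0 by rewrite mulf_neq0.
have vta : v (2 * a) = 0 by rewrite (val_mul HF two0 a0) v2 va.
have vtai : v ((2 * a)^-1) = 0 by rewrite (v_inv HF ta0) vta.
have tai0 : (2 * a)^-1 != 0 by rewrite invr_eq0.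
have E1 : a' = (2 * a * a - e) * (2 * a)^-1 by rewrite /a' /e; field; rewrite two0 a0.
have E2 : a' * a' - u = e * e * ((2 * a)^-1 * (2 * a)^-1)
  by rewrite /a' /e; field; rewrite two0 a0.
have E3 : a' - a = - e * (2 * a)^-1 by rewrite /a' /e; field; rewrite two0 a0.
have taa0 : 2 * a * a != 0 by rewrite mulf_neq0.
have vtaa : v (2 * a * a) = 0 by rewrite (val_mul HF ta0 a0) vta va.
have [N0 vN] : (2 * a * a - e) != 0 /\ v (2 * a * a - e) = 0.
  have [->|e0] := eqVneq e 0; first by rewrite subr0.
  case: he => [/eqP|[_ he]]; first by rewrite (negPf e0).
  have ne0 : - e != 0 by rewrite oppr_eq0.
  have [//|h1 h2] := v_strict HF taa0 ne0; last by rewrite h2 vtaa.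
  rewrite (v_opp HF e0) vtaa; move: he; move: (v e); lia.
split.
- by rewrite E1 mulf_neq0.
- by rewrite E1 (val_mul HF N0 tai0) vN vtai.
- rewrite E2; have := ip_mul HF (ip_mul HF he he) (ip_mul HF (ip_v v tai0) (ip_v v tai0)).
  by apply: ip_mono; rewrite vtai; lia.
- rewrite E3; have := ip_mul HF (ip_opp HF he) (ip_v v tai0).
  by apply: ip_mono; rewrite vtai; lia.
Qed.

Lemma hensel (F : fieldType) (v : F -> int) q (HF : nonarch_local_field v q)
  (u : F) : (2 : F) != 0 -> v 2 = 0 -> in_pow v 1 (u - 1) -> exists w, w * w = u.
Proof.
move=> two0 v2 hu.
pose f (a : F) := (a + u / a) / 2.
pose w n := iter n f 1.
have inv : forall n, [/\ w n != 0, v (w n) = 0 & in_pow v n.+1 (w n * w n - u)].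
  elim=> [|n [h1 h2 h3]].
    split; rewrite /w /= ?oner_neq0 ?(v_one HF) //.
    rewrite mulr1 -opprB; move: (ip_opp HF hu); apply: ip_mono; lia.
  have [a1 a2 a3 _] := hensel_step HF two0 v2 h1 h2 h3.
  by split.
have dif : forall n, in_pow v n.+1 (w n.+1 - w n).
  move=> n; have [h1 h2 h3] := inv n.
  by have [_ _ _ ] := hensel_step HF two0 v2 h1 h2 h3.
have cau : forall N n, (N <= n)%N -> in_pow v N (w n - w N).
  move=> N; elim=> [|n IH]; first by rewrite leqn0 => /eqP->; rewrite subrr; left.
  rewrite leq_eqVlt => /orP[/eqP->|]; first by rewrite subrr; left.
  rewrite ltnS => le; have h := IH le.
  have -> : w n.+1 - w N = (w n.+1 - w n) + (w n - w N) by rewrite addrA subrK.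
  apply: (ip_add HF _ h); apply: ip_mono (dif n); lia.
have [l hl] : exists l, forall k : int, exists N : nat, forall n : nat, (N <= n)%N ->
      in_pow v k (w n - l).
  apply: (val_complete HF) => k; exists `|k|%N => m n hm hn.
  have -> : w m - w n = (w m - w `|k|%N) - (w n - w `|k|%N) by rewrite opprB addrA subrK.
  apply: (@ip_mono _ _ `|k|%N); first lia.
  have h1 := cau _ _ hm. have h2 := ip_opp HF (cau _ _ hn). exact: (ip_add HF h1 h2).
exists l; apply/eqP; rewrite -subr_eq0; apply/eqP; apply: (@ip_zero _ v) => k.
have [N hN] := hl (`|k|%N + 1).
set n := (N + `|k|)%N.
have hd := hN n (leq_addr _ _).
have [h1 h2 h3] := inv n.
have -> : l * l - u = (w n * w n - u) - (w n - l) * (2 * w n - (w n - l)) by ring.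
apply: (@ip_mono _ _ (`|k|%N + 1)); first lia.
have e3 : in_pow v (`|k|%N + 1) (w n * w n - u) by apply: ip_mono h3; rewrite /n; lia.
apply: (ip_add HF e3); apply: (ip_opp HF).
have tw0 : 2 * w n != 0 by rewrite mulf_neq0.
have e4 : in_pow v 0 (2 * w n) by have := ip_v v tw0; rewrite (val_mul HF two0 h1) v2 h2.
have e5 : in_pow v 0 (- (w n - l)) by apply: (ip_opp HF); apply: ip_mono hd; lia.
apply: ip_mono (ip_mul HF hd (ip_add HF e4 e5)); lia.
Qed.


Lemma zm1 (V : zmodType) (X A B C E : V) : (X - B + C) - (X - A + E) = (A - B) + (C - E).
Proof. by rewrite opprD opprB addrACA [X - B + _]addrC [A - X + _]addrA subrK. Qed.

Lemma alg_inj (F : fieldType) (D : falgType F) (a b : F) : a%:A = b%:A :> D -> a = b.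
Proof.
move/eqP; rewrite -subr_eq0 -scalerBl scaler_eq0 oner_eq0 orbF subr_eq0.
by move/eqP.
Qed.

Lemma lin_dep (F : fieldType) (D : falgType F) (x : D) (k m : F) :
  (forall a, x != a%:A) -> k *: x + m%:A = 0 -> k = 0 /\ m = 0.
Proof.
move=> ns e.
have [k0|k0] := eqVneq k 0.
  split=> //; move: e; rewrite k0 scale0r add0r => e.
  by apply: (@alg_inj _ D); rewrite e scale0r.
have : x = (- (k^-1 * m))%:A.
  rewrite scaleNr -scalerA -scalerN -(addKr (k *: x) (m%:A)) addrC.
  rewrite e sub0r opprK scalerA mulVf // scale1r //.
by move=> ex; move: (ns (- (k^-1 * m))); rewrite ex eqxx.
Qed.

Lemma rcp_spec (F : fieldType) (D : falgType F) (x : D) :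
  (exists tn, rcp_coeffs x tn) -> rcp_coeffs x (rcp x).
Proof.
move=> [tn h]; rewrite /rcp; exact: (epsilon_spec (inhabits (0,0)) (rcp_coeffs x) (ex_intro _ tn h)).
Qed.

Lemma rcp_nonscal (F : fieldType) (D : falgType F) (x : D) (t n : F) :
  (forall a, x != a%:A) -> x * x - t *: x + n%:A = 0 -> rcp x = (t, n).
Proof.
move=> ns e.
have : rcp_coeffs x (rcp x) by apply: rcp_spec; exists (t, n); right.
case=> [[a [xa _]]|[_ e']]; first by move: (ns a); rewrite xa eqxx.
case: (rcp x) e' => t' n' /= e'.
have h : (x * x - t *: x + n%:A) - (x * x - t' *: x + n'%:A) = 0 by rewrite e e' subrr.
rewrite zm1 -!scalerBl in h.
have [h1 h2] := lin_dep ns h.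
by rewrite (subr0_eq h1) (subr0_eq h2).
Qed.

Lemma rcp_scal (F : fieldType) (D : falgType F) (a : F) :
  rcp (a%:A : D) = (a *+ 2, a ^+ 2).
Proof.
have : rcp_coeffs (a%:A : D) (rcp (a%:A : D)) by apply: (@rcp_spec F D); exists (a *+ 2, a ^+ 2); left; exists a.
case=> [[a' [/alg_inj <- ->]]//|[ns _]].
by move: (ns a); rewrite eqxx.
Qed.


Definition Em (F : fieldType) (D : falgType F) (mu : D) (a b : F) : D := a%:A + b *: mu.

Lemma E_add (F : fieldType) (D : falgType F) (mu : D) a b a' b' :
  Em mu a b + Em mu a' b' = Em mu (a + a') (b + b').
Proof. by rewrite /Em addrACA -scalerDl -scalerDl. Qed.

Lemma E_scale (F : fieldType) (D : falgType F) (mu : D) k a b :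
  k *: Em mu a b = Em mu (k * a) (k * b).
Proof. by rewrite /Em scalerDr !scalerA. Qed.

Lemma E_opp (F : fieldType) (D : falgType F) (mu : D) a b :
  - Em mu a b = Em mu (- a) (- b).
Proof. by rewrite /Em opprD -!scaleNr. Qed.

Lemma E_mul (F : fieldType) (D : falgType F) (mu : D) t0 n0 a b a' b' :
  mu * mu = t0 *: mu - n0%:A ->
  Em mu a b * Em mu a' b' = Em mu (a * a' - b * b' * n0) (a * b' + b * a' + b * b' * t0).
Proof.
move=> hmu.
have t1 : a%:A * a'%:A = Em mu (a * a') 0 by rewrite /Em mulr_algl scalerA scale0r addr0.
have t2 : a%:A * (b' *: mu) = Em mu 0 (a * b') by rewrite /Em mulr_algl scalerA scale0r add0r.
have t3 : (b *: mu) * a'%:A = Em mu 0 (b * a') by rewrite /Em mulr_algr scalerA scale0r add0r mulrC.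
have t4 : (b *: mu) * (b' *: mu) = Em mu (- (b * b' * n0)) (b * b' * t0).
  rewrite -scalerAl -scalerAr hmu scalerA scalerBr !scalerA /Em addrC.
  by rewrite scaleNr.
rewrite {1 2}/Em mulrDl !mulrDr t1 t2 t3 t4 !E_add.
by congr Em; ring.
Qed.

Lemma E_inj (F : fieldType) (D : falgType F) (mu : D) a b a' b' :
  (forall k, mu != k%:A) -> Em mu a b = Em mu a' b' -> a = a' /\ b = b'.
Proof.
move=> ns e.
have : Em mu (a - a') (b - b') = 0 by rewrite -E_add -E_opp e subrr.
rewrite /Em addrC.
case/(lin_dep ns) => h1 h2; split; exact: subr0_eq.
Qed.

Lemma E_mu (F : fieldType) (D : falgType F) (mu : D) : mu = Em mu 0 1.
Proof. by rewrite /Em scale0r add0r scale1r. Qed.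

Lemma E_comm (F : fieldType) (D : falgType F) (mu : D) t0 n0 a b a' b' :
  mu * mu = t0 *: mu - n0%:A ->
  Em mu a b * Em mu a' b' = Em mu a' b' * Em mu a b.
Proof. by move=> hmu; rewrite !(E_mul _ _ _ _ hmu); congr Em; ring. Qed.

Lemma E_commu (F : fieldType) (D : falgType F) (mu : D) t0 n0 a b :
  mu * mu = t0 *: mu - n0%:A -> Em mu a b * mu = mu * Em mu a b.
Proof.
move=> hmu; have := E_comm a b 0 1 hmu; by rewrite -!E_mu.
Qed.

Lemma E_gm (F : fieldType) (D : falgType F) (mu gm : D) t0 a b :
  gm * mu = Em mu t0 (-1) * gm ->
  gm * Em mu a b = Em mu (a + b * t0) (- b) * gm.
Proof.
move=> hgm.
have -> : Em mu a b = Em mu a 0 + b *: mu by rewrite /Em scale0r addr0.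
have -> : Em mu (a + b * t0) (- b) = Em mu a 0 + b *: Em mu t0 (-1).
  by rewrite E_scale E_add; congr Em; ring.
rewrite mulrDr mulrDl -scalerAr -scalerAl hgm /Em scale0r !addr0 mulr_algl mulr_algr.
by [].
Qed.

Lemma E_zero (F : fieldType) (D : falgType F) (mu : D) : Em mu 0 0 = 0.
Proof. by rewrite /Em !scale0r addr0. Qed.

Lemma E_nz (F : fieldType) (D : falgType F) (mu : D) a b :
  (forall k, mu != k%:A) -> (a != 0) || (b != 0) -> Em mu a b != 0.
Proof.
move=> ns h; apply/eqP; rewrite -(E_zero mu) => /(E_inj ns) [a0 b0].
by move: h; rewrite a0 b0 eqxx.
Qed.

Lemma defect (F : fieldType) (D : falgType F) (mu gm : D) t0 n0 a b c' d :
  mu * mu = t0 *: mu - n0%:A -> gm * mu = Em mu t0 (-1) * gm ->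
  mu * (Em mu a b + Em mu c' d * gm) - (Em mu a b + Em mu c' d * gm) * mu
  = Em mu c' d * (Em mu (- t0) 2 * gm).
Proof.
move=> hmu hgm.
have e2 : Em mu (- t0) 2 = mu - Em mu t0 (-1).
  by rewrite {2}(E_mu mu) E_opp E_add; congr Em; ring.
rewrite e2.
have cX := E_commu a b hmu; have cY := E_commu c' d hmu.
move: cX cY hgm; set X := Em mu a b; set Y := Em mu c' d; set c := Em mu t0 (-1).
move=> cX cY hgm; clearbody X Y c.
rewrite mulrDr mulrDl -cX [mu * (Y * gm)]mulrA -cY -[Y * gm * mu]mulrA hgm.
by rewrite opprD addrACA subrr add0r !mulrA -mulrBl -mulrBr.
Qed.


Lemma cancel_l (F : fieldType) (D : falgType F) (HU : forall x : D, x != 0 -> x \is a GRing.unit)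
  (w y : D) : w != 0 -> w * y = 0 -> y = 0.
Proof. by move=> w0 e; rewrite -(mulKr (HU w w0) y) e mulr0. Qed.

Lemma cancel_r (F : fieldType) (D : falgType F) (HU : forall x : D, x != 0 -> x \is a GRing.unit)
  (w y : D) : w != 0 -> y * w = 0 -> y = 0.
Proof. by move=> w0 e; rewrite -(mulrK (HU w w0) y) e mul0r. Qed.

Lemma sum4 (F : fieldType) (D : falgType F) (mu gm : D) (k : 'I_4 -> F) :
  \sum_(i < 4) k i *: [tuple 1; mu; gm; mu * gm]`_i =
  Em mu (k ord0) (k (lift ord0 ord0)) +
  Em mu (k (lift ord0 (lift ord0 ord0))) (k (lift ord0 (lift ord0 (lift ord0 ord0)))) * gm.
Proof.
rewrite !big_ord_recl big_ord0 addr0 /=.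
rewrite /Em mulrDl mulr_algl -scalerAl !addrA.
by [].
Qed.

Lemma indep (F : fieldType) (D : falgType F) (HU : forall x : D, x != 0 -> x \is a GRing.unit)
  (mu gm : D) t0 n0 :
  (2 : F) != 0 -> (forall k, mu != k%:A) -> mu * mu = t0 *: mu - n0%:A ->
  gm * mu = Em mu t0 (-1) * gm -> gm != 0 ->
  forall a b c' d, Em mu a b + Em mu c' d * gm = 0 -> [/\ a = 0, b = 0, c' = 0 & d = 0].
Proof.
move=> two0 ns hmu hgm gm0 a b c' d e.
have := defect a b c' d hmu hgm; rewrite e mulr0 mul0r subrr => /esym.
have W0 : Em mu (- t0) 2 * gm != 0.
  have Enz : Em mu (- t0) 2 != 0 by apply: E_nz => //; rewrite two0 orbT.
  by apply/eqP => /(cancel_l HU Enz); apply/eqP.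
move/(cancel_r HU W0); rewrite -(E_zero mu) => /(E_inj ns) [hc hd].
move: e; rewrite hc hd E_zero mul0r addr0 -(E_zero mu) => /(E_inj ns) [-> ->].
by [].
Qed.

Lemma decomp (F : fieldType) (D : falgType F) (HD : quaternion_division_algebra D)
  (mu gm : D) t0 n0 :
  (2 : F) != 0 -> (forall k, mu != k%:A) -> mu * mu = t0 *: mu - n0%:A ->
  gm * mu = Em mu t0 (-1) * gm -> gm != 0 ->
  forall x, exists a b c' d, x = Em mu a b + Em mu c' d * gm.
Proof.
case: HD => dim4 HU _ two0 ns hmu hgm gm0 x.
set X := [tuple 1; mu; gm; mu * gm].
have fX : free X.
  apply/freeP => k; rewrite sum4 => e.
  have [h0 h1 h2 h3] := indep HU two0 ns hmu hgm gm0 e.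
  case=> [[|[|[|[|i]]]] Hi] //.
  - by rewrite -h0; congr k; apply: val_inj.
  - by rewrite -h1; congr k; apply: val_inj.
  - by rewrite -h2; congr k; apply: val_inj.
  - by rewrite -h3; congr k; apply: val_inj.
have bX : basis_of fullv X by rewrite basisEfree fX subvf dim4 size_tuple.
have := coord_basis bX (memvf x); rewrite sum4 => ->.
by do 4 eexists.
Qed.


Lemma q_ge2 (F : fieldType) (v : F -> int) q (HF : nonarch_local_field v q) : (2 <= q)%N.
Proof.
have [s [sz [_ [_ cov]]]] := residue_card HF.
have [r0 r0s h0] := cov 0 (ip0 v 0).
have i1 : in_pow v 0 1 by right; rewrite oner_neq0 (v_one HF).
have [r1 r1s h1] := cov 1 i1.
clear cov; case: s sz r0s r1s => [|r [|r' s']] //= sz.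
  rewrite !inE => /eqP e0 /eqP e1; subst r0 r1.
  have := ip_add HF h1 (ip_opp HF h0); rewrite opprB addrA subrK subr0.
  by case=> [/eqP|[_]]; [rewrite oner_eq0 | rewrite (v_one HF)].
by rewrite -sz.
Qed.

Lemma absF_ge0 (F : fieldType) (v : F -> int) q x : 0 <= absF v q x.
Proof. by rewrite /absF; case: ifP => // _; apply: exprz_ge0; rewrite ler0n. Qed.

Lemma absF_min (F : fieldType) (v : F -> int) q (q1 : (1 <= q)%N) x y z :
  x != 0 -> y != 0 -> z != 0 -> v z = Num.min (v x) (v y) ->
  absF v q z = Num.max (absF v q x) (absF v q y).
Proof.
move=> x0 y0 z0 e; rewrite /absF (negPf x0) (negPf y0) (negPf z0) e.
have q1' : 1 <= (q%:Q) by rewrite ler1n.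
have [le|lt] := leP (v x) (v y).
  rewrite max_l //; apply: ler_weXz2l => //; rewrite lerN2 //.
rewrite max_r //; apply: ler_weXz2l => //; rewrite lerN2 ltW //.
Qed.


Lemma W_nz (F : fieldType) (D : falgType F) (HU : forall x : D, x != 0 -> x \is a GRing.unit)
  (mu gm : D) t0 : (2 : F) != 0 -> (forall k, mu != k%:A) -> gm != 0 ->
  Em mu (- t0) 2 * gm != 0.
Proof.
move=> two0 ns gm0.
have Enz : Em mu (- t0) 2 != 0 by apply: E_nz => //; rewrite two0 orbT.
by apply/eqP => /(cancel_l HU Enz); apply/eqP.
Qed.

Lemma centr (F : fieldType) (D : falgType F) (HD : quaternion_division_algebra D)
  (mu gm : D) t0 n0 :
  (2 : F) != 0 -> (forall k, mu != k%:A) -> mu * mu = t0 *: mu - n0%:A ->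
  gm * mu = Em mu t0 (-1) * gm -> gm != 0 ->
  forall x, x * mu = mu * x -> exists a b, x = Em mu a b.
Proof.
move=> two0 ns hmu hgm gm0 x cx.
have [a [b [c' [d ex]]]] := decomp HD two0 ns hmu hgm gm0 x.
have HU := let: And3 _ HU _ := HD in HU.
have := defect a b c' d hmu hgm; rewrite -ex cx subrr => /esym.
move/(cancel_r HU (@W_nz _ _ HU mu gm t0 two0 ns gm0)); rewrite -(E_zero mu) => /(E_inj ns) [hc hd].
by exists a, b; rewrite ex hc hd E_zero mul0r addr0.
Qed.

Lemma gm2 (F : fieldType) (D : falgType F) (HD : quaternion_division_algebra D)
  (mu gm : D) t0 n0 :
  (2 : F) != 0 -> (forall k, mu != k%:A) -> mu * mu = t0 *: mu - n0%:A ->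
  gm * mu = Em mu t0 (-1) * gm -> gm != 0 ->
  exists s, gm * gm = s%:A.
Proof.
move=> two0 ns hmu hgm gm0.
have HU := let: And3 _ HU _ := HD in HU.
have gc : gm * Em mu t0 (-1) = mu * gm.
  rewrite (E_gm _ _ hgm) {2}(E_mu mu); congr (Em _ _ _ * _); ring.
have : gm * gm * mu = mu * (gm * gm) by rewrite -mulrA hgm mulrA gc mulrA.
case/(centr HD two0 ns hmu hgm gm0) => a [b e].
have : gm * (gm * gm) = (gm * gm) * gm by rewrite mulrA.
rewrite e (E_gm _ _ hgm) => /eqP; rewrite -subr_eq0 -mulrBl => /eqP.
move/(cancel_r HU gm0); rewrite E_opp E_add -(E_zero mu) => /(E_inj ns) [_ hb].
have b0 : b = 0.
  have : - (b * 2) = 0 by rewrite mulr_natr mulr2n opprD.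
  by move/eqP; rewrite oppr_eq0 mulf_eq0 (negPf two0) orbF => /eqP.
by exists a; rewrite b0 /Em scale0r addr0.
Qed.


Lemma Kpart (F : fieldType) (D : falgType F)
  (K : {vspace D}) (HK1 : 1 \in K) (HKmul : (K * K <= K)%VS) (HKdim : \dim K = 2%N)
  (mu : D) (HmuK : mu \in K) (HmuF : mu \notin 1%VS) :
  (forall k, mu != k%:A) /\ exists t0 n0, mu * mu = t0 *: mu - n0%:A.
Proof.
have ns : forall k, mu != k%:A.
  move=> k; apply/eqP => e; move: HmuF; rewrite e.
  by rewrite memvZ // memv_line.
split=> //.
set X := [tuple 1; mu].
have fX : free X.
  apply/freeP => k; rewrite !big_ord_recl big_ord0 addr0 /= => e.
  have : Em mu (k ord0) (k (lift ord0 ord0)) = Em mu 0 0 by rewrite E_zero -e.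
  case/(E_inj ns) => h0 h1.
  case=> [[|[|i]] Hi] //.
  - by rewrite -h0; congr k; apply: val_inj.
  - by rewrite -h1; congr k; apply: val_inj.
have sXK : (<<X>> <= K)%VS.
  by apply/span_subvP => y; rewrite !inE => /orP[/eqP->|/eqP->].
have bX : basis_of K X by rewrite basisEfree fX sXK HKdim size_tuple.
have mm : mu * mu \in K by apply: (subvP HKmul); apply: memv_mul.
have := coord_basis bX mm; rewrite !big_ord_recl big_ord0 addr0 /= => ->.
exists (coord X (lift ord0 ord0) (mu * mu)), (- coord X ord0 (mu * mu)).
by rewrite scaleNr opprK addrC.
Qed.


Lemma zm2 (V : zmodType) (A1 B1 C1 S PA : V) :
  A1 + C1 + S - (B1 + C1) + (PA - S) = A1 - B1 + PA.
Proof.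
rewrite (addrAC A1 C1 S) (addrC B1 C1) opprD (addrA (A1 + S + C1) (- C1) (- B1)) addrK.
rewrite (addrAC A1 S (- B1)) -(addrA (A1 - B1) S (PA - S)) (addrC PA (- S)).
by rewrite (addrA S (- S) PA) subrr add0r.
Qed.

Lemma zm3 (V : zmodType) (N X S : V) : N - X + (X - S) = N - S.
Proof. by rewrite addrA subrK. Qed.

Lemma scal_comm (F : fieldType) (D : falgType F) (mu : D) k : k%:A * mu = mu * k%:A.
Proof. by rewrite mulr_algl mulr_algr. Qed.

Lemma E_sq (F : fieldType) (D : falgType F) (mu : D) t0 n0 a b :
  mu * mu = t0 *: mu - n0%:A ->
  Em mu a b * Em mu a b - (2 * a + b * t0) *: Em mu a b
    + (a ^+ 2 + a * b * t0 + b ^+ 2 * n0)%:A = 0.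
Proof.
move=> hmu.
have -> : (a ^+ 2 + a * b * t0 + b ^+ 2 * n0)%:A = Em mu (a ^+ 2 + a * b * t0 + b ^+ 2 * n0) 0.
  by rewrite /Em scale0r addr0.
rewrite (E_mul _ _ _ _ hmu) E_scale E_opp !E_add -(E_zero mu); congr Em; ring.
Qed.

Lemma noncomm (F : fieldType) (D : falgType F) (HU : forall x : D, x != 0 -> x \is a GRing.unit)
  (mu gm : D) t0 n0 a b :
  (2 : F) != 0 -> (forall k, mu != k%:A) -> mu * mu = t0 *: mu - n0%:A ->
  gm * mu = Em mu t0 (-1) * gm -> gm != 0 ->
  (Em mu a b + gm) * mu != mu * (Em mu a b + gm).
Proof.
move=> two0 ns hmu hgm gm0; apply/eqP => e.
have e1 : Em mu 1 0 = 1 by rewrite /Em scale0r addr0 scale1r.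
have := defect a b 1 0 hmu hgm; rewrite e1 mul1r e subrr mul1r => /esym/eqP.
by rewrite (negPf (@W_nz _ _ HU mu gm t0 two0 ns gm0)).
Qed.


Lemma NE (F : fieldType) (D : falgType F) (mu : D) t0 n0 a b :
  (forall k, mu != k%:A) -> mu * mu = t0 *: mu - n0%:A ->
  Nrd (Em mu a b) = a ^+ 2 + a * b * t0 + b ^+ 2 * n0.
Proof.
move=> ns hmu.
have [->|b0] := eqVneq b 0.
  have -> : Em mu a 0 = a%:A by rewrite /Em scale0r addr0.
  by rewrite /Nrd rcp_scal /=; ring.
rewrite /Nrd (rcp_nonscal (t := 2 * a + b * t0) _ (E_sq a b hmu)) //.
move=> k; apply/eqP => e.
have : Em mu a b = Em mu k 0 by rewrite e /Em scale0r addr0.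
by case/(E_inj ns) => _ /eqP; rewrite (negPf b0).
Qed.

Unset Implicit Arguments. Set Strict Implicit.

Theorem mainTheorem7 (F : fieldType) (v : F -> int) (q : nat)
  (HF : nonarch_local_field v q)
  (D : falgType F) (HD : quaternion_division_algebra D)
  (K : {vspace D}) (HK1 : 1 \in K) (HKmul : (K * K <= K)%VS) (HKdim : \dim K = 2%N)
  (mu : D) (HmuK : mu \in K) (HmuF : mu \notin 1%VS)
  (H2 : absD v q (2 : D) = 1) :
  forall g gp gm : D, Dplus mu gp -> Dminus mu gm -> g = gp + gm ->
    absD v q g = Num.max (absD v q gp) (absD v q gm).
Proof.
have HU := let: And3 _ HU _ := HD in HU.
have [ns [t0 [n0 hmu]]] := Kpart HK1 HKmul HKdim HmuK HmuF.
have q2 := q_ge2 HF.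
have [two0 v2] : (2 : F) != 0 /\ v 2 = 0.
  move: H2; rewrite /absD /Nrd.
  have -> : (2 : D) = (2 : F)%:A by rewrite scaler_nat.
  rewrite rcp_scal /= /absF.
  case: ifP => [_ /eqP|/negbT]; first by rewrite eq_sym oner_eq0.
  rewrite expf_eq0 /= => t0' e.
  split=> //.
  have q0 : 0 < (q%:Q) by rewrite ltr0n; lia.
  have q1 : (q%:Q) != 1 by rewrite pnatr_eq1; lia.
  have := ieexprIz q0 q1 (etrans e (esym (expr0z _))).
  rewrite expr2 (val_mul HF t0' t0'); move: (v 2); lia.
have hc : conjK mu = Em mu t0 (-1).
  have e0 : mu * mu - t0 *: mu + n0%:A = 0 by rewrite hmu addrAC subrK subrr.
  by rewrite /conjK /Trd (rcp_nonscal ns e0) /= /Em scaleN1r.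
move=> g gp gm Hp Hm ->.
rewrite /Dminus hc in Hm; rewrite /Dplus in Hp.
have [->|gm0] := eqVneq gm 0.
  rewrite addr0 {3}/absD.
  have -> : (0 : D) = (0 : F)%:A by rewrite scale0r.
  by rewrite /Nrd rcp_scal /= expr0n /= /absF eqxx max_l // absF_ge0.
have [a [b ep]] := centr HD two0 ns hmu Hm gm0 Hp.
have [s es] := gm2 HD two0 ns hmu Hm gm0.
subst gp.
set P := a ^+ 2 + a * b * t0 + b ^+ 2 * n0.
have NP : Nrd (Em mu a b) = P by exact: NE.
have nsc : forall a' b' k, Em mu a' b' + gm != k%:A.
  move=> a' b' k; apply/eqP => e.
  by move: (@noncomm _ _ HU mu gm t0 n0 a' b' two0 ns hmu Hm gm0); rewrite e scal_comm eqxx.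
have NM : Nrd gm = - s.
  have := nsc 0 0; rewrite E_zero add0r => ns'.
  rewrite /Nrd (rcp_nonscal (t := 0) (n := - s) ns') //.
  by rewrite es scale0r subr0 scaleNr subrr.
have NG : Nrd (Em mu a b + gm) = P - s.
  rewrite /Nrd (rcp_nonscal (t := 2 * a + b * t0) (n := P - s) (nsc a b)) //.
  have hsq : (Em mu a b + gm) * (Em mu a b + gm)
      = Em mu a b * Em mu a b + (2 * a + b * t0) *: gm + s%:A.
    have hg := E_gm a b Hm.
    have eXX : Em mu a b + Em mu (a + b * t0) (- b) = (2 * a + b * t0)%:A.
      rewrite E_add /Em (_ : b + - b = 0) ?subrr // scale0r addr0.
      by congr (_ *: _); ring.
    move: hg eXX; set Xb := Em mu (a + b * t0) (- b); set X := Em mu a b.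
    clearbody X Xb => hg eXX.
    rewrite mulrDl !mulrDr hg es addrA -(addrA (X * X) (X * gm) (Xb * gm)) -mulrDl eXX mulr_algl.
    by [].
  rewrite hsq scalerDr scalerBl zm2; exact: E_sq.
have aniso : forall a' b', a' ^+ 2 + a' * b' * t0 + b' ^+ 2 * n0 != s.
  move=> a' b'; apply/eqP => eN.
  have hg := E_gm a' b' Hm.
  have hg' : gm * Em mu (a' + b' * t0) (- b') = Em mu a' b' * gm.
    by rewrite (E_gm _ _ Hm); congr (Em _ _ _ * _); ring.
  have hXX : Em mu a' b' * Em mu (a' + b' * t0) (- b') = s%:A.
    rewrite (E_mul _ _ _ _ hmu) /Em (_ : a' * (- b') + b' * (a' + b' * t0) + b' * - b' * t0 = 0).
      by rewrite scale0r addr0 -eN; congr (_ *: _); ring.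
    by ring.
  have y0 : Em mu a' b' + gm != 0 by have := nsc a' b' 0; rewrite scale0r.
  have : (Em mu a' b' + gm) * (Em mu (a' + b' * t0) (- b') - gm) = 0.
    move: hg' hXX; set Xb := Em mu (a' + b' * t0) (- b'); set X := Em mu a' b'.
    clearbody X Xb => hg' hXX.
    by rewrite mulrDl !mulrBr hg' hXX es zm3 subrr.
  move/(cancel_l HU y0)/subr0_eq => eg.
  move: (@noncomm _ _ HU mu gm t0 n0 0 0 two0 ns hmu Hm gm0).
  by rewrite E_zero add0r -eg (E_commu _ _ hmu) eqxx.
have s0 : s != 0.
  apply/eqP => s0; move: es; rewrite s0 scale0r => /(cancel_l HU gm0) gm00.
  by move: gm0; rewrite gm00 eqxx.
have ns0 : - s != 0 by rewrite oppr_eq0.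
rewrite /absD NP NM NG.
have [P0|P0] := eqVneq P 0.
  by rewrite P0 sub0r {2}/absF eqxx max_r // absF_ge0.
have Ps0 : P - s != 0 by rewrite subr_eq0 (aniso a b).
apply: absF_min => //; first lia.
case: (ltgtP (v P) (v (- s))) => h.
- by have [_ ->] := v_strict HF P0 ns0 h.
- by have [_ e] := v_strict HF ns0 P0 h; rewrite addrC e.
have le := val_add HF P0 ns0 Ps0.
suff : v (P - s) <= v P.
  move: le; rewrite -h /Num.min; case: ifP => _; move: (v P) (v (P - s)); lia.
rewrite leNgt; apply/negP => lt.
set u := P / s.
have hu : in_pow v 1 (u - 1).
  have -> : u - 1 = (P - s) / s by rewrite /u; field.
  right; split; first by rewrite mulf_neq0 // invr_eq0.
  rewrite (val_mul HF Ps0) ?invr_eq0 // (v_inv HF s0) -(v_opp HF s0) -h.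
  by move: lt; move: (v P) (v (P - s)); lia.
have [w hw] := hensel HF two0 v2 hu.
have w0 : w != 0.
  apply/eqP => w0; move: hw; rewrite w0 mul0r /u => /esym/eqP.
  by rewrite mulf_eq0 invr_eq0 (negPf P0) (negPf s0).
have E1 : (a / w) ^+ 2 + a / w * (b / w) * t0 + (b / w) ^+ 2 * n0 = P / (w * w).
  by rewrite /P; field.
have E2 : P / (w * w) = s by rewrite hw /u; field; rewrite P0 s0.
by move: (aniso (a / w) (b / w)); rewrite E1 E2 eqxx.
Qed.
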